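(* For every formula $A$ of $\mathbf{L_1}$: $\dashv_H A$ if and only if $TA$ is not valid in first-order predicate logic with equality.
   Context: Formulas of $\mathbf{L_1}$: built from atomic formulas $\epsilon ab$ ($a,b$ name variables, possibly equal) with primitive connectives $\vee,\sim$; $\wedge,\supset,\equiv$ defined as usual. Disjunctions may be associated in any way. $\vdash_H A$: $A$ belongs to the smallest set containing all instances of classical propositional tautologies and all formulas $\epsilon ab\supset\epsilon aa$, $(\epsilon ab\wedge\epsilon bc)\supset\epsilon ac$, $(\epsilon ab\wedge\epsilon bb)\supset\epsilon ba$, closed under modus ponens. Positive/negative parts (occurrences): $A$ is a positive part of $A$; if $B\vee C$ is a positive part then $B,C$ are positive parts; if $\sim B$ is a positive part then $B$ is a negative part; if $\sim B$ is a negative part then $B$ is a positive part. $F[B_+,B_-]$ denotes a formula in which some $B$ has one occurrence as positive part and another non-overlapping occurrence as negative part. Hintikka formula: a formula $H$ such that (1) $H$ is not of the form $F[B_+,B_-]$; (2) if $B\vee C$ is a negative part of $H$ then $B$ or $C$ is; (3) if $\epsilon ab$ is a negative part then so is $\epsilon aa$; (4) if $\epsilon ab,\epsilon bc$ are negative parts then so is $\epsilon ac$; (5) if $\epsilon ab,\epsilon bb$ are negative parts then so is $\epsilon ba$. $\mathbf{HAR}$: fix a name variable $a_0$; $\dashv_H$ is the smallest set such that $\dashv_H\epsilon a_0a_0$; $\dashv_H\sim\epsilon a_0a_0$; if $\vdash_H A\supset B$ and $\dashv_H B$ then $\dashv_H A$; if $\dashv_H A$ and $A$ is obtained from $B$ by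 uniform substitution of name variables for name variables then $\dashv_H B$; if $A$ is a Hintikka formula that is a disjunction of atomic or negated atomic formulas, $\dashv_H A$, and $\epsilon ab$ is not a negative part of $A$, then $\dashv_H A\vee\epsilon ab$. Translation $T$ into first-order logic with equality, with a monadic predicate $F_a$ for each name variable $a$: $T\epsilon ab=\exists x(F_ax\wedge F_bx)\wedge\forall x\forall y(F_ax\wedge F_ay\supset x=y)$; $T(A\vee B)=TA\vee TB$; $T(\sim A)=\sim TA$. Valid: true in every structure with nonempty domain and $=$ as identity. *)

(* Defs.v *)
From Stdlib Require Import List.
Import ListNotations.

Definition name := nat.

Inductive form : Type :=
| Eps : name -> name -> form
| Or : form -> form -> form
| Neg : form -> form.

Definition And (A B : form) : form := Neg (Or (Neg A) (Neg B)).
Definition Imp (A B : form) : form := Or (Neg A) B.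
Definition Iff (A B : form) : form := And (Imp A B) (Imp B A).

Inductive pform : Type :=
| PVar : nat -> pform
| POr : pform -> pform -> pform
| PNeg : pform -> pform.

Fixpoint peval (v : nat -> bool) (P : pform) : bool :=
  match P with
  | PVar n => v n
  | POr P Q => orb (peval v P) (peval v Q)
  | PNeg P => negb (peval v P)
  end.

Definition ptautology (P : pform) : Prop := forall v, peval v P = true.

Fixpoint psubst (s : nat -> form) (P : pform) : form :=
  match P with
  | PVar n => s n
  | POr P Q => Or (psubst s P) (psubst s Q)
  | PNeg P => Neg (psubst s P)
  end.

Definition taut_instance (A : form) : Prop :=
  exists (P : pform) (s : nat -> form), ptautology P /\ A = psubst s P.

Inductive provH : form -> Prop :=
| pH_taut A : taut_instance A -> provH A
| pH_ax1 a b : provH (Imp (Eps a b) (Eps a a))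
| pH_ax2 a b c : provH (Imp (And (Eps a b) (Eps b c)) (Eps a c))
| pH_ax3 a b : provH (Imp (And (Eps a b) (Eps b b)) (Eps b a))
| pH_mp A B : provH (Imp A B) -> provH A -> provH B.

(** * Positive / negative parts (occurrences)
   An occurrence is given by its path from the root; polarity [true] means
   positive, [false] negative. *)
Inductive dir : Type := DL | DR | DN.

Inductive part (A : form) : list dir -> form -> bool -> Prop :=
| part_top : part A [] A true
| part_orl p B C : part A p (Or B C) true -> part A (p ++ [DL]) B true
| part_orr p B C : part A p (Or B C) true -> part A (p ++ [DR]) C true
| part_neg p B pol : part A p (Neg B) pol -> part A (p ++ [DN]) B (negb pol).

Definition pos_part (B A : form) : Prop := exists p, part A p B true.
Definition neg_part (B A : form) : Prop := exists p, part A p B false.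

Definition prefix (p q : list dir) : Prop := exists r, q = p ++ r.

(* A is of the form F[B_+, B_-]: some B has a positive occurrence and a
   non-overlapping negative occurrence. *)
Definition has_pos_neg (A : form) : Prop :=
  exists B p q, part A p B true /\ part A q B false /\
    ~ prefix p q /\ ~ prefix q p.

Definition hintikka (H : form) : Prop :=
  ~ has_pos_neg H /\
  (forall B C, neg_part (Or B C) H -> neg_part B H \/ neg_part C H) /\
  (forall a b, neg_part (Eps a b) H -> neg_part (Eps a a) H) /\
  (forall a b c, neg_part (Eps a b) H -> neg_part (Eps b c) H ->
     neg_part (Eps a c) H) /\
  (forall a b, neg_part (Eps a b) H -> neg_part (Eps b b) H ->
     neg_part (Eps b a) H).

Inductive literal_disj : form -> Prop :=
| ld_atom a b : literal_disj (Eps a b)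
| ld_neg a b : literal_disj (Neg (Eps a b))
| ld_or A B : literal_disj A -> literal_disj B -> literal_disj (Or A B).

Fixpoint nsubst (s : name -> name) (A : form) : form :=
  match A with
  | Eps a b => Eps (s a) (s b)
  | Or A B => Or (nsubst s A) (nsubst s B)
  | Neg A => Neg (nsubst s A)
  end.

Inductive rejH (a0 : name) : form -> Prop :=
| rH_pos : rejH a0 (Eps a0 a0)
| rH_neg : rejH a0 (Neg (Eps a0 a0))
| rH_mr A B : provH (Imp A B) -> rejH a0 B -> rejH a0 A
| rH_subst A B (s : name -> name) : rejH a0 A -> A = nsubst s B -> rejH a0 B
| rH_hint A a b : hintikka A -> literal_disj A -> rejH a0 A ->
    ~ neg_part (Eps a b) A -> rejH a0 (Or A (Eps a b)).

Definition var := nat.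

Inductive fo : Type :=
| FPred : name -> var -> fo
| FEq : var -> var -> fo
| FNot : fo -> fo
| FOr : fo -> fo -> fo
| FAnd : fo -> fo -> fo
| FImp : fo -> fo -> fo
| FEx : var -> fo -> fo
| FAll : var -> fo -> fo.

Definition upd {D : Type} (v : var -> D) (x : var) (d : D) : var -> D :=
  fun y => if Nat.eqb y x then d else v y.

Fixpoint sat {D : Type} (I : name -> D -> Prop) (v : var -> D) (phi : fo)
  : Prop :=
  match phi with
  | FPred a x => I a (v x)
  | FEq x y => v x = v y
  | FNot p => ~ sat I v p
  | FOr p q => sat I v p \/ sat I v q
  | FAnd p q => sat I v p /\ sat I v q
  | FImp p q => sat I v p -> sat I v q
  | FEx x p => exists d : D, sat I (upd v x d) p
  | FAll x p => forall d : D, sat I (upd v x d) p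
  end.

Definition fo_valid (phi : fo) : Prop :=
  forall (D : Type), inhabited D ->
  forall (I : name -> D -> Prop) (v : var -> D), sat I v phi.

Fixpoint T (A : form) : fo :=
  match A with
  | Eps a b =>
      FAnd (FEx 0 (FAnd (FPred a 0) (FPred b 0)))
           (FAll 0 (FAll 1 (FImp (FAnd (FPred a 0) (FPred a 1)) (FEq 0 1))))
  | Or A B => FOr (T A) (T B)
  | Neg A => FNot (T A)
  end.

(* Main.v *)
Require Import Defs.
From Stdlib Require Import List Bool Classical ClassicalEpsilon FunctionalExtensionality PropExtensionality Cantor.
Import ListNotations.

Fixpoint evalb (al : name -> name -> bool) (A : form) : bool :=
  match A with
  | Eps a b => al a b
  | Or A B => evalb al A || evalb al B
  | Neg A => negb (evalb al A)
  end.

Definition mb {D : Type} (I : name -> D -> Prop) (v : var -> D) (c d : name) : bool :=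
  if excluded_middle_informative (sat I v (T (Eps c d))) then true else false.

Lemma sat_evalb {D : Type} (I : name -> D -> Prop) v A :
  sat I v (T A) <-> evalb (mb I v) A = true.
Proof.
  induction A as [c d|A IHA B IHB|A IHA]; simpl.
  - unfold mb. destruct (excluded_middle_informative _) as [h|h]; simpl in *; split; intros; try tauto; discriminate.
  - rewrite orb_true_iff. tauto.
  - rewrite negb_true_iff. destruct (evalb (mb I v) A).
    + split; intro H; [exfalso; apply H; apply IHA; reflexivity | discriminate].
    + split; intro H; [reflexivity | intro H'; apply IHA in H'; discriminate].
Qed.

Fixpoint abs (A : form) : pform :=
  match A with
  | Eps a b => PVar (to_nat (a, b))
  | Or A B => POr (abs A) (abs B)
  | Neg A => PNeg (abs A)
  end.

Definition sdec (n : nat) : form := let (a, b) := of_nat n in Eps a b.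

Lemma psubst_abs A : psubst sdec (abs A) = A.
Proof.
  induction A; simpl; try congruence.
  unfold sdec. pose proof (cancel_of_to (n, n0)) as E. simpl in E. rewrite E. reflexivity.
Qed.

Lemma peval_abs w A : peval w (abs A) = evalb (fun a b => w (to_nat (a, b))) A.
Proof. induction A; simpl; [reflexivity|rewrite IHA1, IHA2; reflexivity|rewrite IHA; reflexivity]. Qed.

Lemma taut_of_eval A : (forall al, evalb al A = true) -> provH A.
Proof.
  intro H. apply pH_taut. exists (abs A), sdec. split.
  - intro w. rewrite peval_abs. apply H.
  - symmetry; apply psubst_abs.
Qed.

Lemma evalb_psubst al s P : evalb al (psubst s P) = peval (fun n => evalb al (s n)) P.
Proof. induction P; simpl; congruence. Qed.

Section Sem.
Context {D : Type} (I : name -> D -> Prop) (v : var -> D).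
Definition SE a b := sat I v (T (Eps a b)).

Lemma SE_iff a b : SE a b <-> ((exists d, I a d /\ I b d) /\ (forall x y, I a x -> I a y -> x = y)).
Proof.
  unfold SE; simpl; unfold upd; simpl. split.
  - intros [[d [h1 h2]] h3]. split. eauto. intros x y hx hy. specialize (h3 x y). simpl in h3. apply h3; auto.
  - intros [[d [h1 h2]] h3]. split. eauto. intros x y [hx hy]. simpl. auto.
Qed.

Lemma SE_r1 a b : SE a b -> SE a a.
Proof. rewrite !SE_iff. intros [[d [h1 h2]] h3]. eauto. Qed.
Lemma SE_r2 a b c : SE a b -> SE b c -> SE a c.
Proof. rewrite !SE_iff. intros [[d [h1 h2]] h3] [[e [h4 h5]] h6].
  split; auto. exists d. split; auto. assert (e = d) by (apply h6; auto). subst; auto. Qed.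
Lemma SE_r3 a b : SE a b -> SE b b -> SE b a.
Proof. rewrite !SE_iff. intros [[d [h1 h2]] h3] [[e [h4 h5]] h6].
  split; auto. exists d. auto. Qed.
End Sem.

Lemma mb_SE {D : Type} (I : name -> D -> Prop) v a b : mb I v a b = true <-> SE I v a b.
Proof. unfold mb, SE. destruct (excluded_middle_informative _); split; intros; auto; try discriminate; tauto. Qed.

Lemma provH_sound F : provH F -> forall D (I : name -> D -> Prop) v, evalb (mb I v) F = true.
Proof.
  induction 1; intros D I v; simpl.
  - destruct H as [P [s [HP ->]]]. rewrite evalb_psubst. apply HP.
  - destruct (mb I v a b) eqn:E; simpl; auto. apply mb_SE. apply mb_SE in E. eapply SE_r1; eauto.
  - destruct (mb I v a b) eqn:E1; destruct (mb I v b c) eqn:E2; simpl; auto.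
    apply mb_SE. apply mb_SE in E1. apply mb_SE in E2. eapply SE_r2; eauto.
  - destruct (mb I v a b) eqn:E1; destruct (mb I v b b) eqn:E2; simpl; auto.
    apply mb_SE. apply mb_SE in E1. apply mb_SE in E2. eapply SE_r3; eauto.
  - specialize (IHprovH1 D I v). specialize (IHprovH2 D I v). simpl in IHprovH1.
    rewrite IHprovH2 in IHprovH1. exact IHprovH1.
Qed.

Lemma sat_nsubst {D : Type} (I : name -> D -> Prop) v s B :
  sat I v (T (nsubst s B)) <-> sat (fun a => I (s a)) v (T B).
Proof.
  induction B; simpl.
  - tauto.
  - rewrite IHB1, IHB2. tauto.
  - rewrite IHB. tauto.
Qed.

Fixpoint onode (A X : form) : Prop :=
  X = A \/ match A with Or B C => onode B X \/ onode C X | _ => False end.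

Fixpoint atp (A : form) (p : list dir) {struct p} : option form :=
  match p with
  | [] => Some A
  | d :: p' => match d, A with
               | DL, Or B _ => atp B p'
               | DR, Or _ C => atp C p'
               | DN, Neg B => atp B p'
               | _, _ => None end
  end.

Lemma atp_app A p r : atp A (p ++ r) = match atp A p with Some B => atp B r | None => None end.
Proof.
  revert A. induction p as [|x p IH]; intro A; cbn; auto.
  destruct x, A; cbn; auto.
Qed.

Fixpoint par (p : list dir) : bool :=
  match p with [] => true | DN :: p' => negb (par p') | _ :: p' => par p' end.

Lemma par_app p r : par (p ++ r) = if par r then par p else negb (par p).
Proof.
  induction p as [|x p IH]; simpl.
  - destruct (par r); auto.
  - destruct x; rewrite IH; destruct (par r); auto.
Qed.

Lemma part_atp A p B pol : part A p B pol -> atp A p = Some B /\ pol = par p.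
Proof.
  induction 1 as [|p B C H [H1 H2]|p B C H [H1 H2]|p B pol H [H1 H2]].
  - auto.
  - rewrite atp_app, H1, par_app. simpl. auto.
  - rewrite atp_app, H1, par_app. simpl. auto.
  - rewrite atp_app, H1, par_app. simpl. subst; auto.
Qed.

Lemma hpn_atom A p q c d : part A p (Eps c d) true -> part A q (Eps c d) false -> has_pos_neg A.
Proof.
  intros Hp Hq. exists (Eps c d), p, q. split; auto. split; auto.
  destruct (part_atp _ _ _ _ Hp) as [Ap Pp]. destruct (part_atp _ _ _ _ Hq) as [Aq Pq].
  split; intros [r Er]; subst.
  - rewrite atp_app, Ap in Aq. destruct r as [|x r].
    + rewrite app_nil_r in Pq. congruence.
    + destruct x; discriminate.
  - rewrite atp_app, Aq in Ap. destruct r as [|x r].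
    + rewrite app_nil_r in Pp. congruence.
    + destruct x; discriminate.
Qed.

Lemma onode_part A B X p : onode B X -> part A p B true -> exists q, part A q X true.
Proof.
  revert p. induction B; intros p Ho Hp; simpl in Ho.
  - destruct Ho as [->|[]]. eauto.
  - destruct Ho as [->|[Ho|Ho]]. eauto.
    + eapply IHB1; eauto. apply part_orl with (C := B2). exact Hp.
    + eapply IHB2; eauto. apply part_orr with (B := B1). exact Hp.
  - destruct Ho as [->|[]]. eauto.
Qed.

Lemma onode_pos A X : onode A X -> pos_part X A.
Proof. intro H. destruct (onode_part A A X [] H (part_top A)) as [q Hq]. exists q; auto. Qed.

Lemma onode_neg A c d : onode A (Neg (Eps c d)) -> neg_part (Eps c d) A.
Proof. intro H. destruct (onode_pos A _ H) as [q Hq]. exists (q ++ [DN]).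
  apply (part_neg A q (Eps c d) true Hq). Qed.

Lemma onode_refl A : onode A A.
Proof. destruct A; simpl; auto. Qed.

Lemma onode_or A B C : onode A (Or B C) -> onode A B /\ onode A C.
Proof.
  induction A; simpl; intros Hn.
  - destruct Hn as [Hn|[]]; discriminate.
  - destruct Hn as [Hn|[Hn|Hn]].
    + injection Hn as -> ->. split; right; [left|right]; apply onode_refl.
    + destruct (IHA1 Hn); split; right; left; auto.
    + destruct (IHA2 Hn); split; right; right; auto.
  - destruct Hn as [Hn|[]]; discriminate.
Qed.

Lemma onode_ld A X : literal_disj A -> onode A X -> literal_disj X.
Proof.
  induction 1 as [a b|a b|B C HB IHB HC IHC]; simpl; intro Hx.
  - destruct Hx as [->|[]]; constructor.
  - destruct Hx as [->|[]]; constructor.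
  - destruct Hx as [->|[Hx|Hx]]; auto. constructor; auto.
Qed.

Lemma part_class A p B pol : literal_disj A -> part A p B pol ->
  (pol = true /\ onode A B) \/ (pol = false /\ exists c d, B = Eps c d /\ onode A (Neg (Eps c d))).
Proof.
  intros HA. induction 1 as [|p B C H IH|p B C H IH|p B pol H IH].
  - left; split; auto; apply onode_refl.
  - destruct IH as [[_ IH]|[? [c [d [? _]]]]]; [|discriminate].
    left; split; auto. apply (onode_or _ _ _ IH).
  - destruct IH as [[_ IH]|[? [c [d [? _]]]]]; [|discriminate].
    left; split; auto. apply (onode_or _ _ _ IH).
  - destruct IH as [[-> IH]|[? [c [d [? _]]]]]; [|discriminate].
    right. split; auto. pose proof (onode_ld _ _ HA IH) as L. inversion L; subst.
    eauto.
Qed.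

Lemma ld_sat {D : Type} (I : name -> D -> Prop) v A : literal_disj A -> sat I v (T A) ->
  exists c d, (onode A (Eps c d) /\ SE I v c d) \/ (onode A (Neg (Eps c d)) /\ ~ SE I v c d).
Proof.
  induction 1 as [a b|a b|B C HB IHB HC IHC]; simpl; intro Hx.
  - exists a, b. left. split; auto.
  - exists a, b. right. split; auto.
  - destruct Hx as [Hx|Hx].
    + destruct (IHB Hx) as [c [d [[? ?]|[? ?]]]]; exists c, d; simpl; auto.
    + destruct (IHC Hx) as [c [d [[? ?]|[? ?]]]]; exists c, d; simpl; auto.
Qed.

Section Model.
Variable N : name -> name -> Prop.
Hypothesis r3 : forall a b, N a b -> N a a.
Hypothesis r4 : forall a b c, N a b -> N b c -> N a c.
Hypothesis r5 : forall a b, N a b -> N b b -> N b a.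

Definition MD := ((name -> Prop) + (name * bool))%type.
Definition cls (c : name) : name -> Prop := fun e => N c e.
Definition MI (c : name) (x : MD) : Prop :=
  (N c c /\ x = inl (cls c)) \/
  (~ N c c /\ ((exists e, N e e /\ N e c /\ x = inl (cls e)) \/ x = inr (c, true) \/ x = inr (c, false))).

Lemma cls_eq c d : N c d -> N d c -> cls c = cls d.
Proof.
  intros h1 h2. unfold cls. apply functional_extensionality. intro e.
  apply propositional_extensionality. split; intro h; eauto.
Qed.

Lemma model_SE (v : var -> MD) c d : SE MI v c d <-> N c d.
Proof.
  rewrite SE_iff. split.
  - intros [[x [hc hd]] hu].
    destruct (classic (N c c)) as [Hc|Hc].
    + destruct hc as [[_ ->]|[Hc' _]]; [|contradiction].
      destruct hd as [[Hd E]|[Hd [[e [He1 [He2 E]]]|[E|E]]]]; try discriminate.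
      * injection E as E. assert (cls d d) as X by exact Hd. rewrite <- E in X. exact X.
      * injection E as E. assert (cls e e) as X by exact He1. rewrite <- E in X. eauto.
    + exfalso. assert (inr (c, true) = inr (c, false) :> MD) as E.
      { apply hu; unfold MI; right; split; auto. }
      discriminate.
  - intro H. assert (Hc : N c c) by eauto. split.
    + exists (inl (cls c)). split.
      * left; auto.
      * destruct (classic (N d d)) as [Hd|Hd].
        -- left. split; auto. rewrite (cls_eq c d); auto.
        -- right. split; auto. left. exists c. auto.
    + intros x y [[_ ->]|[Hc' _]] [[_ ->]|[Hc'' _]]; auto; contradiction.
Qed.
End Model.

Lemma hint_sound A a b : hintikka A -> literal_disj A -> ~ neg_part (Eps a b) A ->
  ~ fo_valid (T (Or A (Eps a b))).
Proof.
  intros [Hpn [_ [R3 [R4 R5]]]] HL Hab Hv.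
  set (N := fun c d => neg_part (Eps c d) A).
  set (v := fun _ : var => (inr (0, true) : MD)).
  specialize (Hv MD (inhabits (inr (0, true))) (MI N) v). simpl in Hv.
  assert (H3 : forall a b, N a b -> N a a) by (subst N; simpl; eauto).
  assert (H4 : forall a b c, N a b -> N b c -> N a c) by (subst N; simpl; eauto).
  assert (H5 : forall a b, N a b -> N b b -> N b a) by (subst N; simpl; eauto).
  pose proof (model_SE N H3 H4 H5 v) as MS.
  destruct Hv as [Hv|Hv].
  - destruct (ld_sat _ _ _ HL Hv) as [c [d [[Ho Hs]|[Ho Hs]]]].
    + apply MS in Hs.
      apply Hpn. destruct (onode_pos _ _ Ho) as [p Hp]. destruct Hs as [q Hq].
      eapply hpn_atom; eauto.
    + apply Hs. apply MS. apply onode_neg; auto.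
  - apply Hab. apply MS in Hv. exact Hv.
Qed.

Lemma soundness a0 A : rejH a0 A -> ~ fo_valid (T A).
Proof.
  induction 1 as [| |A B HP HR IH|A B s HR IH E|A a b HH HL HR IH Hn].
  - intro Hv. specialize (Hv unit (inhabits tt) (fun _ _ => False) (fun _ => tt)).
    simpl in Hv. destruct Hv as [[d [[] _]] _].
  - intro Hv. specialize (Hv unit (inhabits tt) (fun _ _ => True) (fun _ => tt)).
    simpl in Hv. apply Hv. split.
    + exists tt; auto.
    + intros [] []; auto.
  - intro Hv. apply IH. intros D HD I v. apply sat_evalb.
    pose proof (provH_sound _ HP D I v) as H1. simpl in H1.
    pose proof (proj1 (sat_evalb I v A) (Hv D HD I v)) as H2. rewrite H2 in H1. exact H1.
  - intro Hv. apply IH. intros D HD I v. subst A. apply sat_nsubst. apply Hv; auto.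
  - apply hint_sound; auto.
Qed.

Fixpoint dlist (h : form) (xs : list form) : form :=
  match xs with [] => h | x :: xs' => dlist (Or h x) xs' end.

Lemma evalb_dlist al h xs : evalb al (dlist h xs) = true <->
  evalb al h = true \/ exists x, In x xs /\ evalb al x = true.
Proof.
  revert h. induction xs as [|x xs IH]; intro h; simpl.
  - split; [auto|]. intros [H|[x [[] _]]]; auto.
  - rewrite IH. simpl. rewrite orb_true_iff. split.
    + intros [[H|H]|[y [Hy H]]]; eauto.
    + intros [H|[y [[<-|Hy] H]]]; eauto.
Qed.

Lemma nsubst_dlist s h xs : nsubst s (dlist h xs) = dlist (nsubst s h) (map (nsubst s) xs).
Proof. revert h. induction xs; intro h; simpl; auto. Qed.

Lemma onode_dlist h xs Y : onode (dlist h xs) Y ->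
  (exists B C, Y = Or B C) \/ onode h Y \/ exists x, In x xs /\ onode x Y.
Proof.
  revert h. induction xs as [|x xs IH]; intros h H; simpl in *; auto.
  destruct (IH _ H) as [E|[[E|[E|E]]|[y [Hy E]]]]; eauto; right; right; eauto.
Qed.

Lemma onode_dlist_h h xs Y : onode h Y -> onode (dlist h xs) Y.
Proof. revert h. induction xs as [|x xs IH]; intros h H; simpl; auto. apply IH. simpl; auto. Qed.

Lemma onode_dlist_x h xs x : In x xs -> onode (dlist h xs) x.
Proof.
  revert h. induction xs as [|y xs IH]; intros h H; simpl in *; [contradiction|].
  destruct H as [<-|H]; auto. apply onode_dlist_h. simpl. right; right. apply onode_refl.
Qed.

Lemma ld_dlist h xs : literal_disj h -> (forall x, In x xs -> literal_disj x) -> literal_disj (dlist h xs).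
Proof.
  revert h. induction xs as [|x xs IH]; intros h H1 H2; simpl; auto.
  apply IH; [constructor; [auto|apply H2; simpl; auto]|intros; apply H2; simpl; auto].
Qed.

Fixpoint names (A : form) : list name :=
  match A with Eps a b => [a; b] | Or A B => names A ++ names B | Neg A => names A end.

Lemma evalb_agree al be X A : (forall c, In c (names A) -> In c X) ->
  (forall c d, In c X -> In d X -> al c d = be c d) -> evalb al A = evalb be A.
Proof.
  intros HX Ha. induction A; simpl in *.
  - apply Ha; apply HX; auto.
  - rewrite IHA1, IHA2; auto; intros; apply HX; apply in_or_app; auto.
  - rewrite IHA; auto.
Qed.

Definition Inv (N : name -> name -> Prop) (h : form) : Prop :=
  literal_disj h /\ (forall c d, onode h (Neg (Eps c d)) <-> N c d) /\
  (forall c d, onode h (Eps c d) -> ~ N c d).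

Section Chain.
Variable a0 : name.
Variable N : name -> name -> Prop.
Hypothesis r3 : forall a b, N a b -> N a a.
Hypothesis r4 : forall a b c, N a b -> N b c -> N a c.
Hypothesis r5 : forall a b, N a b -> N b b -> N b a.

Lemma inv_negpart h c d : Inv N h -> (neg_part (Eps c d) h <-> N c d).
Proof.
  intros [HL [HN HP]]. split.
  - intros [p Hp]. destruct (part_class _ _ _ _ HL Hp) as [[E _]|[_ [c' [d' [E H]]]]]; [discriminate|].
    injection E as -> ->. apply HN; auto.
  - intro H. apply onode_neg. apply HN; auto.
Qed.

Lemma inv_hint h : Inv N h -> hintikka h.
Proof.
  intros Hi. pose proof Hi as [HL [HN HP]]. split; [|split; [|split; [|split]]].
  - intros [B [p [q [Hp [Hq _]]]]].
    destruct (part_class _ _ _ _ HL Hq) as [[E _]|[_ [c [d [-> H]]]]]; [discriminate|].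
    destruct (part_class _ _ _ _ HL Hp) as [[_ H2]|[E _]]; [|discriminate].
    apply (HP c d H2). apply HN; auto.
  - intros B C [p Hp]. destruct (part_class _ _ _ _ HL Hp) as [[E _]|[_ [c [d [E _]]]]]; discriminate.
  - intros a b H. apply (inv_negpart _ _ _ Hi). apply (inv_negpart _ _ _ Hi) in H. eauto.
  - intros a b c H1 H2. apply (inv_negpart _ _ _ Hi). apply (inv_negpart _ _ _ Hi) in H1.
    apply (inv_negpart _ _ _ Hi) in H2. eauto.
  - intros a b H1 H2. apply (inv_negpart _ _ _ Hi). apply (inv_negpart _ _ _ Hi) in H1.
    apply (inv_negpart _ _ _ Hi) in H2. eauto.
Qed.

Lemma chain xs : forall h, Inv N h -> rejH a0 h ->
  (forall x, In x xs -> exists c d, x = Eps c d /\ ~ N c d) -> rejH a0 (dlist h xs).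
Proof.
  induction xs as [|x xs IH]; intros h Hi Hr Hx; simpl; auto.
  destruct (Hx x (or_introl eq_refl)) as [c [d [-> Hcd]]].
  apply IH.
  - destruct Hi as [HL [HN HP]]. split; [constructor; auto; constructor|split].
    + intros c' d'. simpl. rewrite <- HN. split.
      * intros [E|[E|[E|[]]]]; try discriminate; auto.
      * auto.
    + intros c' d' [E|[E|[E|[]]]]; try discriminate; auto.
      injection E as -> ->. auto.
  - apply rH_hint; auto.
    + apply inv_hint; auto.
    + apply Hi.
    + rewrite (inv_negpart _ _ _ Hi). auto.
  - intros y Hy. apply Hx. simpl; auto.
Qed.
End Chain.

Definition negatom (p : name * name) : form := Neg (Eps (fst p) (snd p)).
Definition posatom (p : name * name) : form := Eps (fst p) (snd p).

Definition mkh0 (a0 : name) (negs : list (name * name)) : form :=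
  match negs with [] => Eps a0 a0 | n :: ns => dlist (negatom n) (map negatom ns) end.

Lemma completeness_model a0 A {D : Type} (I : name -> D -> Prop) v :
  ~ sat I v (T A) -> rejH a0 A.
Proof.
  intro Hs.
  set (m := mb I v).
  set (X := a0 :: names A).
  set (pairs := list_prod X X).
  set (negs := filter (fun p => m (fst p) (snd p)) pairs).
  set (poss := filter (fun p => negb (m (fst p) (snd p))) pairs).
  set (N := fun c d => In (c, d) negs).
  assert (HN : forall c d, N c d <-> In c X /\ In d X /\ SE I v c d).
  { intros c d. unfold N, negs, pairs. rewrite filter_In, in_prod_iff. simpl.
    unfold m. rewrite mb_SE. tauto. }
  assert (HP : forall c d, In (c, d) poss <-> In c X /\ In d X /\ ~ SE I v c d).
  { intros c d. unfold poss, pairs. rewrite filter_In, in_prod_iff. simpl.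
    unfold m. rewrite negb_true_iff. rewrite <- mb_SE.
    destruct (mb I v c d); split; intuition congruence. }
  assert (R3 : forall a b, N a b -> N a a).
  { intros a b. rewrite !HN. intros [? [? ?]]. split; auto. split; auto. eapply SE_r1; eauto. }
  assert (R4 : forall a b c, N a b -> N b c -> N a c).
  { intros a b c. rewrite !HN. intros [? [? ?]] [? [? ?]]. split; auto. split; auto. eapply SE_r2; eauto. }
  assert (R5 : forall a b, N a b -> N b b -> N b a).
  { intros a b. rewrite !HN. intros [? [? ?]] [? [? ?]]. split; auto. split; auto. eapply SE_r3; eauto. }
  set (h0 := mkh0 a0 negs).
  set (L := dlist h0 (map posatom poss)).
  assert (Hi0 : Inv N h0 /\ rejH a0 h0).
  { unfold h0, mkh0, N. destruct negs as [|n ns] eqn:En.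
    - split; [|constructor]. split; [constructor|split].
      + intros c d. simpl. split; [intros [E|[]]; discriminate|intros []].
      + intros c d _ [].
    - split; [split; [|split]|].
      + apply ld_dlist. destruct n; constructor. intros x Hx. apply in_map_iff in Hx.
        destruct Hx as [[p q] [<- _]]. constructor.
      + intros c d. split.
        * intro H. destruct (onode_dlist _ _ _ H) as [[B [C E]]|[E|[x [Hx E]]]]; [discriminate| |].
          -- destruct n as [p q]. simpl in E. destruct E as [E|[]]. injection E as -> ->. simpl; auto.
          -- apply in_map_iff in Hx. destruct Hx as [[p q] [<- Hx]].
             simpl in E. destruct E as [E|[]]. injection E as -> ->. simpl; auto.
        * intros [E|E].
          -- subst n. apply onode_dlist_h. apply onode_refl.
          -- apply onode_dlist_x. apply in_map_iff. exists (c, d). auto.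
      + intros c d H. exfalso. destruct (onode_dlist _ _ _ H) as [[B [C E]]|[E|[x [Hx E]]]]; [discriminate| |].
        -- destruct n as [p q]. simpl in E. destruct E as [E|[]]. discriminate.
        -- apply in_map_iff in Hx. destruct Hx as [[p q] [<- Hx]].
           simpl in E. destruct E as [E|[]]. discriminate.
      + apply rH_subst with (A := nsubst (fun _ => a0) (dlist (negatom n) (map negatom ns))) (s := fun _ => a0); auto.
        apply rH_mr with (B := Neg (Eps a0 a0)); [|constructor].
        apply taut_of_eval. intro al. rewrite nsubst_dlist. simpl.
        destruct (evalb al (dlist (Neg (Eps a0 a0)) (map (nsubst (fun _ => a0)) (map negatom ns)))) eqn:E; auto.
        apply evalb_dlist in E. destruct E as [E|[x [Hx E]]].
        * simpl in E. rewrite E. reflexivity.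
        * rewrite map_map in Hx. apply in_map_iff in Hx. destruct Hx as [p [<- _]]. simpl in E. rewrite E. reflexivity. }
  destruct Hi0 as [Hi0 Hr0].
  apply rH_mr with (B := L).
  - apply taut_of_eval. intro al. simpl.
    destruct (classic (forall c d, In c X -> In d X -> al c d = m c d)) as [Hag|Hag].
    + rewrite (evalb_agree al m X A); auto.
      * destruct (evalb m A) eqn:E; auto. exfalso. apply Hs. apply sat_evalb. exact E.
      * intros c Hc. simpl. auto.
    + apply orb_true_iff. right.
      apply not_all_ex_not in Hag. destruct Hag as [c Hag].
      apply not_all_ex_not in Hag. destruct Hag as [d Hag].
      apply imply_to_and in Hag. destruct Hag as [Hc Hag].
      apply imply_to_and in Hag. destruct Hag as [Hd Hne].
      apply evalb_dlist.
      destruct (m c d) eqn:Em.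
      * left. assert (Hn : In (c, d) negs) by (apply HN; unfold m in Em; rewrite mb_SE in Em; auto).
        assert (Ha : al c d = false) by (destruct (al c d); congruence).
        unfold h0, mkh0. destruct negs as [|n ns]; [destruct Hn|].
        apply evalb_dlist. destruct Hn as [->|Hn].
        -- left. simpl. rewrite Ha. reflexivity.
        -- right. exists (negatom (c, d)). split; [apply in_map; auto|]. simpl. rewrite Ha. reflexivity.
      * right. exists (posatom (c, d)). split.
        -- apply in_map. apply HP. split; auto. split; auto. intro H. apply mb_SE in H. unfold m in Em. congruence.
        -- simpl. destruct (al c d); congruence.
  - apply (chain a0 N R3 R4 R5); auto.
    intros x Hx. apply in_map_iff in Hx. destruct Hx as [[c d] [<- Hx]].
    exists c, d. split; auto. intro H. apply HN in H. apply HP in Hx. tauto.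
Qed.

Theorem corollary6p1 : forall (a0 : name) (A : form),
  rejH a0 A <-> ~ fo_valid (T A).
Proof.
  intros a0 A. split.
  - apply soundness.
  - intro H. apply NNPP. intro Hn. apply H. intros D HD I v.
    apply NNPP. intro Hs. apply Hn. eapply completeness_model; eauto.
Qed.
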